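(* Let $X$ be an infinite-dimensional II-polyhedral real Banach space. Then $B_X$ does not have slices of arbitrarily small diameter; that is, there exists $\delta>0$ such that every slice of $B_X$ has diameter at least $\delta$.
   Context: All Banach spaces are real. For a Banach space $X$, $B_X$ denotes the closed unit ball, $X^*$ the dual, and $Ext(B_{X^*})$ the set of extreme points of $B_{X^*}$. For a set $A\subseteq X^*$, $A'$ denotes the set of accumulation points of $A$ in the weak$^*$ topology of $X^*$. $X$ is called II-polyhedral if there exists $0<r<1$ such that $(Ext B_{X^*})'\subseteq rB_{X^*}$. A slice of $B_X$ is a set of the form $S(B_X,f,\alpha)=\{x\in B_X: f(x)>\|f\|-\alpha\}$ with $f\in X^*\setminus\{0\}$ and $\alpha>0$. *)

(* Defs.v *)
From HB Require Import structures.
From mathcomp Require Import all_boot all_order all_algebra.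
From mathcomp Require Import all_classical all_reals all_analysis.
Set Implicit Arguments. Unset Strict Implicit. Unset Printing Implicit Defensive.
Import Order.TTheory GRing.Theory Num.Theory.
Import numFieldNormedType.Exports.
Local Open Scope classical_set_scope.
Local Open Scope ring_scope.

Section Defs.
Context {R : realType} {X : normedModType R}.

Definition is_dual (f : X -> R) : Prop :=
  (forall (a : R) (x y : X), f (a *: x + y) = a * f x + f y) /\ continuous f.

Definition dnorm (f : X -> R) : R :=
  sup [set r : R | exists x : X, `|x| <= 1 /\ r = `|f x|].

Definition dual_ball : set (X -> R) := [set f | is_dual f /\ dnorm f <= 1].

Definition Ext_dual_ball : set (X -> R) :=
  [set f | dual_ball f /\
     forall g h : X -> R, dual_ball g -> dual_ball h ->
       (forall x, f x = (g x + h x) / 2) -> g = h].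

(* Weak* accumulation points of A ⊆ X^*: every basic weak* neighbourhood
   { g : |g x_i - f x_i| < eps, i < n } of f meets A \ {f}. *)
Definition wstar_acc (A : set (X -> R)) : set (X -> R) :=
  [set f | is_dual f /\
     forall (n : nat) (xs : 'I_n -> X) (eps : R), 0 < eps ->
       exists g, A g /\ g <> f /\ forall i, `|g (xs i) - f (xs i)| < eps].

Definition II_polyhedral : Prop :=
  exists r : R, 0 < r < 1 /\
    forall f, wstar_acc Ext_dual_ball f -> dnorm f <= r.

Definition finite_dimensional : Prop :=
  exists (n : nat) (e : 'I_n -> X),
    forall x : X, exists c : 'I_n -> R, x = \sum_(i < n) c i *: e i.

Definition slice (f : X -> R) (alpha : R) : set X :=
  [set x | `|x| <= 1 /\ dnorm f - alpha < f x].

Definition diam (S : set X) : R :=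
  sup [set r : R | exists x y, S x /\ S y /\ r = `|x - y|].

End Defs.

(* Main.v *)
Require Import Defs.
From HB Require Import structures.
From mathcomp Require Import all_boot all_order all_algebra.
From mathcomp Require Import all_classical all_reals all_analysis.
From mathcomp Require Import ring lra.
Import Order.TTheory GRing.Theory Num.Theory.
Import numFieldNormedType.Exports.
Local Open Scope classical_set_scope.
Local Open Scope ring_scope.

Section Basic.
Context {R : realType} {X : normedModType R}.

Definition lin (f : X -> R) := forall (a : R) (x y : X), f (a *: x + y) = a * f x + f y.

Lemma lin0 f : lin f -> f 0 = 0.
Proof. move=> H; have := H 1 0 0; rewrite scaler0 addr0 mul1r => h.
by apply: (@addrI _ (f 0)); rewrite addr0 -h. Qed.
Lemma linZ f a x : lin f -> f (a *: x) = a * f x.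
Proof. by move=> H; have := H a x 0; rewrite addr0 lin0 // addr0. Qed.
Lemma linD f x y : lin f -> f (x + y) = f x + f y.
Proof. by move=> H; have := H 1 x y; rewrite scale1r mul1r. Qed.
Lemma linN f x : lin f -> f (- x) = - f x.
Proof. by move=> H; rewrite -scaleN1r linZ // mulN1r. Qed.
Lemma linB f x y : lin f -> f (x - y) = f x - f y.
Proof. by move=> H; rewrite linD // linN. Qed.

Lemma dual_bounded (f : X -> R) : is_dual f -> exists2 C, 0 < C & forall x, `|f x| <= C * `|x|.
Proof.
move=> [Hl Hc]; have := Hc 0; move=> /cvgrPdist_lt /(_ 1 ltr01).
rewrite lin0 // => /nbhs_norm0P [e e0 He].
exists (2 / e); first by rewrite divr_gt0.
move=> x; have [->|x0] := eqVneq x 0; first by rewrite lin0 // normr0 normr0 mulr0.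
have nx : 0 < `|x| by rewrite normr_gt0.
pose y := (e / 2 / `|x|) *: x.
have ny : `|y| < e.
  rewrite /y normrZ gtr0_norm ?divr_gt0 // divfK ?gt_eqF // ltr_pdivrMr // ltr_pMr // ltr1n //.
have := He y ny; rewrite /= sub0r normrN /y linZ // normrM.
rewrite (@gtr0_norm _ (e / 2 / `|x|)) ?divr_gt0 // => H.
have : `|f x| < 2 * `|x| / e.
  have k : 0 < e / 2 / `|x| by rewrite !divr_gt0.
  rewrite -(ltr_pM2l k); have -> : e / 2 / `|x| * (2 * `|x| / e) = 1.
    by field; rewrite ?gt_eqF.
  exact: H.
by move=> /ltW; rewrite mulrAC mulrC.
Qed.

Lemma dnorm_set_ub (f : X -> R) : is_dual f ->
  has_ubound [set r : R | exists x : X, `|x| <= 1 /\ r = `|f x|].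
Proof.
move=> /dual_bounded [C C0 HC]; exists C => _ [x [x1 ->]].
by apply: (le_trans (HC x)); rewrite ler_piMr // ltW.
Qed.

Lemma dnorm_ge (f : X -> R) x : is_dual f -> `|x| <= 1 -> `|f x| <= dnorm f.
Proof. by move=> fd x1; apply: ub_le_sup; [exact: dnorm_set_ub|exists x]. Qed.
Arguments dnorm_ge {f x}.

Lemma dnorm_le (f : X -> R) c : (forall x, `|x| <= 1 -> `|f x| <= c) -> dnorm f <= c.
Proof.
move=> H; apply: ge_sup; first by exists `|f 0|, 0; rewrite normr0 ler01.
by move=> _ [x [x1 ->]]; exact: H.
Qed.

Lemma dnorm_ge0 (f : X -> R) : is_dual f -> 0 <= dnorm f.
Proof.
move=> fd; have h : `|(0:X)| <= 1 by rewrite normr0 ler01.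
have := dnorm_ge fd h; apply: le_trans; exact: normr_ge0.
Qed.

Lemma dual_ball_bound (f : X -> R) x : dual_ball f -> `|f x| <= `|x|.
Proof.
move=> [fd f1]; have [->|x0] := eqVneq x 0.
  by rewrite lin0 ?normr0 //; case: fd.
have nx : 0 < `|x| by rewrite normr_gt0.
have y1 : `|(`|x|^-1 *: x)| <= 1.
  by rewrite normrZ normfV normr_id mulVf ?gt_eqF.
have := le_trans (dnorm_ge fd y1) f1.
rewrite linZ; last by case: fd.
by rewrite normrM normfV normr_id ler_pdivrMl // mulr1.
Qed.

Lemma lin_cont (f : X -> R) c : lin f -> (forall x, `|f x| <= c * `|x|) -> is_dual f.
Proof.
move=> fl H; split => // x0; apply/cvgrPdist_lt => eps e0.
have c1 : 0 < `|c| + 1 by rewrite ltr_pwDr.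
apply/nbhs_normP; exists (eps / (`|c| + 1)); first by rewrite /= divr_gt0.
move=> t /=; rewrite -linB // => h; apply: (le_lt_trans (H _)).
apply: (le_lt_trans (ler_wpM2r (normr_ge0 _) (ler_norm c))).
apply: (le_lt_trans (ler_wpM2r (normr_ge0 _) (_ : `|c| <= `|c| + 1))); first by rewrite lerDl.
by rewrite mulrC -ltr_pdivlMr.
Qed.

Lemma bound_dual_ball (f : X -> R) : lin f -> (forall x, `|f x| <= `|x|) -> dual_ball f.
Proof.
move=> fl H; have fd : is_dual f by apply: (@lin_cont _ 1) => // x; rewrite mul1r.
by split => //; apply: dnorm_le => x x1; exact: le_trans (H x) x1.
Qed.

End Basic.

Section HahnBanach.
Context {R : realType} {X : normedModType R}.

Definition sublin (q : X -> R) := (forall x y, q (x + y) <= q x + q y) /\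
  (forall (a : R) x, 0 < a -> q (a *: x) = a * q x).

Lemma sublin0 q : sublin q -> q 0 = 0.
Proof. by move=> [_ h]; have := h 2 0 (ltr0Sn _ 1); rewrite scaler0; lra. Qed.

Lemma sublinZ0 q t x : sublin q -> 0 <= t -> q (t *: x) = t * q x.
Proof.
move=> hq; rewrite le_eqVlt => /orP[/eqP <-|t0]; last by case: hq => _ ->.
by rewrite scale0r mul0r sublin0.
Qed.

Lemma sublin_lb q x : sublin q -> - q (- x) <= q x.
Proof.
move=> hq; have := hq.1 x (- x); rewrite subrr sublin0 //; lra.
Qed.
Arguments sublin_lb {q} x.

Definition qset (q : X -> R) (a x : X) := [set v : R | exists2 t : R, 0 <= t & v = q (x + t *: a) - t * q a].
Definition qa (q : X -> R) (a x : X) := inf (qset q a x).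

Lemma qset_lb q a x : sublin q -> has_lbound (qset q a x).
Proof.
move=> hq; exists (- q (- x)) => _ [t t0 ->].
have := hq.1 (x + t *: a) (- x); rewrite addrC addKr sublinZ0 //; lra.
Qed.

Lemma qset_n0 q a x : qset q a x !=set0.
Proof. by exists (q (x + 0 *: a) - 0 * q a), 0. Qed.

Lemma qa_elem q a x t : sublin q -> 0 <= t -> qa q a x <= q (x + t *: a) - t * q a.
Proof. by move=> hq t0; apply: ge_inf; [exact: qset_lb|exists t]. Qed.
Arguments qa_elem {q} a x {t}.

Lemma qa_ge q a x c : (forall t, 0 <= t -> c <= q (x + t *: a) - t * q a) -> c <= qa q a x.
Proof. by move=> H; apply: lb_le_inf; [exact: qset_n0|move=> _ [t t0 ->]; exact: H]. Qed.

Lemma qa_le q a x : sublin q -> qa q a x <= q x.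
Proof. by move=> hq; have := qa_elem a x hq (lexx 0); rewrite scale0r addr0 mul0r subr0. Qed.
Arguments qa_le {q} a x.

Lemma qa_neg q a : sublin q -> qa q a (- a) <= - q a.
Proof. by move=> hq; have := qa_elem a (- a) hq ler01; rewrite scale1r addNr sublin0 // mul1r sub0r. Qed.
Arguments qa_neg {q} a.

Lemma qa_sublin q a : sublin q -> sublin (qa q a).
Proof.
move=> hq; split.
- move=> x y.
  suff : qa q a (x + y) - qa q a y <= qa q a x by lra.
  apply: qa_ge => t t0.
  suff : qa q a (x + y) - (q (x + t *: a) - t * q a) <= qa q a y by lra.
  apply: qa_ge => s s0.
  have := qa_elem a (x + y) hq (addr_ge0 t0 s0).
  have -> : x + y + (t + s) *: a = (x + t *: a) + (y + s *: a).
    by rewrite scalerDl addrACA.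
  have := hq.1 (x + t *: a) (y + s *: a); lra.
- move=> l x l0; apply/eqP; rewrite eq_le; apply/andP; split.
  + rewrite -ler_pdivrMl //; apply: qa_ge => t t0.
    rewrite ler_pdivrMl // mulrBr mulrA.
    have := qa_elem a (l *: x) hq (mulr_ge0 (ltW l0) t0).
    rewrite -scalerA -scalerDr (hq.2 _ _ l0); lra.
  + apply: qa_ge => t t0.
    have tl : 0 <= t / l by rewrite divr_ge0 // ltW.
    have := qa_elem a x hq tl.
    rewrite -(ler_pM2l l0) => h; apply: (le_trans h).
    rewrite mulrBr -(hq.2 _ _ l0) scalerDr scalerA mulrCA divff ?gt_eqF // mulr1.
    by rewrite mulrA mulrCA divff ?gt_eqF // mulr1.
Qed.

Lemma sublin_norm : sublin (fun x : X => `|x|).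
Proof.
split; first by move=> x y; exact: ler_normD.
by move=> a x a0; rewrite normrZ gtr0_norm.
Qed.

Lemma sublin_lin g : sublin g -> (forall a, g (- a) <= - g a) -> lin g.
Proof.
move=> hg hN.
have gN a : g (- a) = - g a.
  apply/eqP; rewrite eq_le hN /=; have := sublin_lb a hg; lra.
have gD x y : g (x + y) = g x + g y.
  apply/eqP; rewrite eq_le hg.1 /=; have := hg.1 (- x) (- y).
  by rewrite -opprD !gN; lra.
have gZ a x : g (a *: x) = a * g x.
  have [a0|a0] := leP 0 a; first by rewrite sublinZ0.
  have -> : a *: x = (- a) *: (- x) by rewrite scaleNr scalerN opprK.
  rewrite sublinZ0 ?oppr_ge0 ?ltW // gN; lra.
by move=> a x y; rewrite gD gZ.
Qed.

Lemma hahn_banach (w : X) : exists g, dual_ball g /\ g w = `|w|.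
Proof.
pose p0 := qa (fun x : X => `|x|) w.
have p0s : sublin p0 by apply: qa_sublin; exact: sublin_norm.
have p0n x : p0 x <= `|x| by apply: qa_le; exact: sublin_norm.
pose Q (q : X -> R) := sublin q /\ forall x, q x <= p0 x.
pose T := {q : X -> R | Q q}.
pose t0 : T := exist _ p0 (conj p0s (fun x => lexx (p0 x))).
pose Rl (s t : T) := `[< forall x, sval t x <= sval s x >].
have Qlb (q : T) x : - `|x| <= sval q x.
  case: q => q [qs qp] /=; have := sublin_lb x qs; have := qp (- x); have := p0n (- x).
  rewrite normrN; lra.
have [m mmax] : exists m : T, premaximal Rl m.
  apply: (ZL_preorder t0).
  - by move=> t; apply/asboolP => x; exact: lexx.
  - move=> r s t /asboolP h1 /asboolP h2; apply/asboolP => x; exact: le_trans (h2 x) (h1 x).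
  move=> A Atot.
  have [[s0 As0]|A0] := pselect (exists s, A s); last first.
    by exists t0 => s As; exfalso; apply: A0; exists s.
  pose S x := [set v : R | exists2 s, A s & v = sval s x].
  have Slb x : has_lbound (S x) by exists (- `|x|) => _ [s _ ->]; exact: Qlb.
  have Sn0 x : S x !=set0 by exists (sval s0 x), s0.
  pose qi x := inf (S x).
  have qi_le s x : A s -> qi x <= sval s x by move=> As; apply: ge_inf => //; exists s.
  have qi_ge x c : (forall s, A s -> c <= sval s x) -> c <= qi x.
    by move=> H; apply: lb_le_inf => // _ [s As ->]; exact: H.
  have Qqi : Q qi.
    split; last by move=> x; apply: le_trans (qi_le _ _ As0) _; case: s0 As0 => q [] /=.
    split.
    + move=> x y; suff : qi (x + y) - qi y <= qi x by lra.
      apply: (qi_ge) => s1 As1; suff : qi (x + y) - sval s1 x <= qi y by lra.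
      apply: (qi_ge) => s2 As2; suff : qi (x + y) <= sval s1 x + sval s2 y by lra.
      have [/asboolP h|/asboolP h] := Atot _ _ As1 As2.
      * apply: le_trans (qi_le _ _ As2) _; case: (svalP s2) => [[hs _] _].
        apply: le_trans (hs _ _) _; have := h x; lra.
      * apply: le_trans (qi_le _ _ As1) _; case: (svalP s1) => [[hs _] _].
        apply: le_trans (hs _ _) _; have := h y; lra.
    + move=> l x l0; apply/eqP; rewrite eq_le; apply/andP; split.
      * rewrite -ler_pdivrMl //; apply: (qi_ge) => s As; rewrite ler_pdivrMl //.
        case: (svalP s) => [[_ hs] _]; rewrite -hs //; exact: qi_le.
      * apply: (qi_ge) => s As; case: (svalP s) => [[_ hs] _]; rewrite hs //.
        by rewrite ler_pM2l //; exact: qi_le.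
  exists (exist _ qi Qqi) => s As; apply/asboolP => x /=; exact: qi_le.
case: m mmax => g [gs gp] mmax.
have gN a : g (- a) <= - g a.
  pose q' := qa g a.
  have Qq' : Q q'.
    split; first exact: qa_sublin.
    by move=> x; apply: le_trans (qa_le _ _ gs) (gp x).
  have /mmax /asboolP /= h : Rl (exist _ g (conj gs gp)) (exist _ q' Qq').
    by apply/asboolP => x /=; exact: qa_le.
  exact: le_trans (h (- a)) (qa_neg _ gs).
have gl : lin g by apply: sublin_lin.
have gn x : g x <= `|x| by exact: le_trans (gp x) (p0n x).
exists g; split.
  apply: bound_dual_ball => // x; rewrite ler_norml gn andbT.
  by have := gn (- x); rewrite normrN linN //; lra.
apply/eqP; rewrite eq_le gn /=.
have := le_trans (gp (- w)) (qa_neg _ sublin_norm); rewrite linN //; lra.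
Qed.

End HahnBanach.

Section Alaoglu.
Context {R : realType} {X : normedModType R}.

Definition wnear (g : X -> R) (S : set (X -> R)) :=
  forall n (xs : 'I_n -> X) (eps : R), 0 < eps ->
     exists h, S h /\ forall i, `|h (xs i) - g (xs i)| < eps.

Lemma alaoglu (F : set_system (X -> R)) : ProperFilter F -> F dual_ball ->
  exists g, dual_ball g /\ forall S, F S -> wnear g S.
Proof.
move=> FF Fb.
have K := @tychonoff X (fun _ : X => R) _ (fun x : X => @segment_compact R (- `|x|) `|x|).
have FK : F [set f : X -> R | forall i : X, [set` `[- `|i|, `|i|]] (f i)].
  apply: filterS Fb => h hb i /=; rewrite in_itv /= -ler_norml.
  exact: dual_ball_bound.
have [g [Kg clg]] := K F FF FK.
have Nb n (xs : 'I_n -> X) (eps : R) : 0 < eps ->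
    nbhs g [set h : X -> R | forall i, `|h (xs i) - g (xs i)| < eps].
  move=> e0.
  have H : forall i : 'I_n, \forall h \near g, `|h (xs i) - g (xs i)| < eps.
    move=> i; have hc : (fun h => h (xs i)) @ g --> g (xs i) := @proj_continuous X (fun _ => R) (xs i) g.
    move/cvgrPdist_lt: hc => /(_ eps e0).
    by apply: filterS => h; rewrite distrC.
  have := @filter_forall _ 'I_n (fun i h => `|h (xs i) - g (xs i)| < eps) (nbhs g) _ H.
  exact.
have near S : F S -> wnear g S.
  move=> FS n xs eps e0; have [h [Sh Hh]] := clg _ _ FS (Nb n xs eps e0).
  by exists h.
exists g; split => //.
have gb x : `|g x| <= `|x|.
  by have := Kg x; rewrite /= in_itv /= -ler_norml.
apply: bound_dual_ball => // a x y.
set d := g (a *: x + y) - (a * g x + g y).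
have [d0'|d0] := eqVneq d 0; first by apply/eqP; rewrite -subr_eq0 -/d d0'.
exfalso.
have dp : 0 < `|d| by rewrite normr_gt0.
have c0 : 0 < 2 + `|a| by rewrite ltr_pwDl.
pose xs := fun i : 'I_3 => nth 0 [:: x; y; a *: x + y] i.
have [h [[[hl _] _] Hh]] := near _ Fb 3 xs _ (divr_gt0 dp c0).
have h1 := Hh (@Ordinal 3 0 isT); have h2 := Hh (@Ordinal 3 1 isT).
have h3 := Hh (@Ordinal 3 2 isT); rewrite /xs /= in h1 h2 h3.
set e := `|d| / (2 + `|a|) in h1 h2 h3.
have he : e * (2 + `|a|) = `|d| by rewrite /e divfK ?gt_eqF.
have E : d = (g (a *: x + y) - h (a *: x + y)) - a * (g x - h x) - (g y - h y).
  by rewrite /d hl; ring.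
rewrite distrC in h3; rewrite distrC in h1; rewrite distrC in h2.
have t1 := ler_normB (g (a *: x + y) - h (a *: x + y) - a * (g x - h x)) (g y - h y).
have t2 := ler_normB (g (a *: x + y) - h (a *: x + y)) (a * (g x - h x)).
rewrite normrM in t2.
have t3 := ler_wpM2l (normr_ge0 a) (ltW h1).
rewrite -E in t1.
have : `|d| < e * (2 + `|a|) by lra.
by rewrite he ltxx.
Qed.

End Alaoglu.

Section KreinMilman.
Context {R : realType} {X : normedModType R}.

Lemma le_eps (a b : R) : (forall eps, 0 < eps -> a < b + eps) -> a <= b.
Proof.
move=> H; rewrite leNgt; apply/negP => ba.
by have := H (a - b); rewrite subr_gt0 => /(_ ba); rewrite addrC subrK ltxx.
Qed.

Lemma wnear_sub (g : X -> R) (S T : set (X -> R)) : S `<=` T -> wnear g S -> wnear g T.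
Proof. by move=> ST H n xs eps e0; have [h [Sh Hh]] := H n xs eps e0; exists h; split => //; exact: ST. Qed.
Arguments wnear_sub {g S T}.

Lemma wnear1 (g : X -> R) S x eps : wnear g S -> 0 < eps -> exists h, S h /\ `|h x - g x| < eps.
Proof. by move=> H e0; have [h [Sh Hh]] := H 1 (fun _ => x) eps e0; exists h; split => //; exact: (Hh ord0). Qed.
Arguments wnear1 {g S} x {eps}.

Definition wclosed (C : set (X -> R)) := forall g, dual_ball g -> wnear g C -> C g.
Definition extremal (C : set (X -> R)) := C `<=` dual_ball /\
  forall g h1 h2, C g -> dual_ball h1 -> dual_ball h2 ->
    (forall x, g x = (h1 x + h2 x) / 2) -> C h1 /\ C h2.
Definition good C := [/\ wclosed C, extremal C & C !=set0].

Definition face (C : set (X -> R)) (x : X) := [set h | C h /\ forall k, C k -> k x <= h x].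

Lemma face_good C x : good C -> good (face C x).
Proof.
move=> [Ccl [Cb Cex] Cn].
pose E := [set v : R | exists2 k, C k & v = k x].
have Eub : has_ubound E by exists `|x| => _ [k Ck ->]; exact: le_trans (ler_norm _) (dual_ball_bound k x (Cb _ Ck)).
have En : E !=set0 by case: Cn => k Ck; exists (k x), k.
pose m := sup E.
have km k : C k -> k x <= m by move=> Ck; apply: ub_le_sup => //; exists k.
split.
- move=> h hb hn; have hC : C h by apply: Ccl => //; apply: (wnear_sub _ hn) => k [].
  split => // k Ck; apply: le_eps => eps e0.
  have [h' [[h'C h'm] h'h]] := wnear1 x hn e0.
  have := h'm k Ck; move: h'h; rewrite ltr_norml; lra.
- split; first by move=> h [/Cb].
  move=> g h1 h2 [gC gm] b1 b2 avg.
  have [C1 C2] := Cex _ _ _ gC b1 b2 avg.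
  have := gm _ C1; have := gm _ C2; have := avg x => e1 e2 e3.
  have ex1 : h1 x = g x by lra.
  have ex2 : h2 x = g x by lra.
  by split; split => // k Ck; [rewrite ex1|rewrite ex2]; exact: gm.
- pose F := [set S : set (X -> R) | exists2 d : R, 0 < d & [set k | C k /\ m - d < k x] `<=` S].
  have FF : ProperFilter F.
    apply: Build_ProperFilter_ex.
    + move=> S [d d0 HS]; have [v [k Ck ->] kv] := sup_adherent d0 (conj En Eub).
      by exists k; apply: HS.
    + split; first by exists 1 => //.
      * move=> S1 S2 [d1 d10 H1] [d2 d20 H2]; exists (Order.min d1 d2); first by rewrite lt_min d10 d20.
        by move=> k [Ck hk]; split; [apply: H1|apply: H2]; split => //; apply: le_lt_trans hk; rewrite lerD2l lerN2 ge_min lexx ?orbT.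
      * by move=> S1 S2 S12 [d d0 H]; exists d => //; exact: subset_trans S12.
  have Fb : F dual_ball by exists 1 => // k [/Cb].
  have [g [gb gn]] := alaoglu F FF Fb.
  have gC : C g.
    apply: Ccl => //; apply: (wnear_sub _ (gn [set k | C k /\ m - 1 < k x] _)); first by move=> k [].
    by exists 1.
  exists g; split => // k Ck; apply: le_trans (km _ Ck) _.
  apply: le_eps => eps e0.
  have e2 : 0 < eps / 2 by rewrite divr_gt0.
  have Fd : F [set k | C k /\ m - eps / 2 < k x] by exists (eps / 2).
  have [h [[hC hm] hh]] := wnear1 x (gn _ Fd) e2.
  move: hh; rewrite ltr_norml; lra.
Qed.

Lemma ball_good : good (@dual_ball R X).
Proof.
split => //; first by split => // g h1 h2 _ b1 b2 _.
exists (fun _ => 0); apply: bound_dual_ball; first by move=> a x y; rewrite mulr0 addr0.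
by move=> x; rewrite normr0.
Qed.

Lemma krein_milman (w : X) (g0 : X -> R) : dual_ball g0 -> 1 < g0 w ->
  exists e, Ext_dual_ball e /\ 1 < e w.
Proof.
move=> g0b g0w.
pose C0 := face dual_ball w.
have C0g : good C0 := @face_good _ w ball_good.
pose T := {C : set (X -> R) | good C /\ C `<=` C0}.
pose t0 : T := exist _ C0 (conj C0g (@subset_refl _ C0)).
pose Rl (s t : T) := `[< sval t `<=` sval s >].
have [m mmax] : exists m : T, premaximal Rl m.
  apply: (ZL_preorder t0).
  - by move=> t; apply/asboolP.
  - move=> r s t /asboolP h1 /asboolP h2; apply/asboolP; exact: subset_trans h2 h1.
  move=> A Atot.
  have [[s0 As0]|A0] := pselect (exists s, A s); last first.
    by exists t0 => s As; exfalso; apply: A0; exists s.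
  pose I := [set h | forall s, A s -> sval s h].
  have Is s : A s -> I `<=` sval s by move=> As h; apply.
  have sgood (s : T) : good (sval s) by case: (svalP s).
  have Ig : good I.
    split.
    + move=> h hb hn s As; case: (sgood s) => scl _ _; apply: scl => //.
      exact: wnear_sub (Is _ As) hn.
    + split; first by move=> h Ih; case: (sgood s0) => _ [sb _] _; apply: sb; exact: Ih.
      move=> g h1 h2 Ig b1 b2 avg; split => s As; case: (sgood s) => _ [_ sex] _;
        by have [] := sex _ _ _ (Ig _ As) b1 b2 avg.
    + pose F := [set S : set (X -> R) | exists2 s, A s & sval s `<=` S].
      have FF : ProperFilter F.
        apply: Build_ProperFilter_ex.
        * by move=> S [s As HS]; case: (sgood s) => _ _ [h sh]; exists h; exact: HS.
        * split; first by exists s0.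
          - move=> S1 S2 [s1 As1 H1] [s2 As2 H2].
            have [/asboolP h|/asboolP h] := Atot _ _ As1 As2.
            + by exists s2 => // k sk; split; [apply: H1; exact: h|exact: H2].
            + by exists s1 => // k sk; split; [exact: H1|apply: H2; exact: h].
          - by move=> S1 S2 S12 [s As H]; exists s => //; exact: subset_trans S12.
      have Fb : F dual_ball by exists s0 => //; case: (sgood s0) => _ [] .
      have [g [gb gn]] := alaoglu F FF Fb.
      exists g => s As; case: (sgood s) => scl _ _; apply: scl => //; apply: gn; by exists s.
  have IC0 : I `<=` C0 by move=> h Ih; case: (svalP s0) => _; apply; exact: Ih.
  by exists (exist _ I (conj Ig IC0)) => s As; apply/asboolP => /=; exact: Is.
case: m mmax => M [[Mcl [Mb Mex] [e Me]] MC0] mmax.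
have uniq e' : M e' -> e' = e.
  move=> Me'; apply: funext => x; apply/eqP; rewrite eq_le.
  have Mg : good M by split => //; exists e.
  have Fg := @face_good M x Mg.
  have FC0 : face M x `<=` C0 by move=> h [/MC0].
  have /mmax /asboolP /= H : Rl (exist _ M (conj Mg MC0)) (exist _ (face M x) (conj Fg FC0)).
    by apply/asboolP => h [].
  have [_ h1] := H _ Me; have [_ h2] := H _ Me'.
  by rewrite h1 ?h2.
exists e; split.
  split; first exact: (Mb _ Me).
  move=> g h gb hb avg; have [Mg Mh] := Mex _ _ _ Me gb hb avg.
  by rewrite (uniq _ Mg) (uniq _ Mh).
have [_ ew] := MC0 _ Me.
exact: lt_le_trans g0w (ew _ g0b).
Qed.

End KreinMilman.

Section Kernel.
Context {R : realType} {X : normedModType R}.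

Definition subsp (V : set X) := V 0 /\ forall (a : R) x y, V x -> V y -> V (a *: x + y).

Definition spanned (V : set X) := exists n (e : 'I_n -> X),
  forall v, V v -> exists c : 'I_n -> R, v = \sum_(i < n) c i *: e i.

Lemma span_ker (l : nat -> X -> R) k : (forall i, (i < k)%N -> lin (l i)) ->
  forall V, subsp V -> (forall v, V v -> (forall i, (i < k)%N -> l i v = 0) -> v = 0) ->
  spanned V.
Proof.
elim: k => [|k IH] hl V [V0 Vs] HV.
  exists 0%N, (fun _ => 0) => v Vv; exists (fun _ => 0); rewrite big_ord0; exact: HV.
have hlk : lin (l k) by apply: hl.
pose V' := [set v | V v /\ l k v = 0].
have V's : subsp V'.
  split; first by split => //; exact: lin0.
  move=> a x y [Vx lx] [Vy ly]; split; first exact: Vs.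
  by rewrite hlk lx ly mulr0 addr0.
have [n [e He]] : spanned V'.
  apply: IH => //; first by move=> i ik; apply: hl; exact: ltnW.
  move=> v [Vv lv] H; apply: HV => // i; rewrite ltnS leq_eqVlt => /orP[/eqP ->//|]; exact: H.
have [[u [Vu lu]]|Hn] := pselect (exists u, V u /\ l k u <> 0); last first.
  exists n, e => v Vv; apply: He; split => //; apply: contrapT => lv; apply: Hn; by exists v.
pose u' := (l k u)^-1 *: u.
have lu' : l k u' = 1 by rewrite linZ // mulVf //; exact/eqP.
pose e' (i : 'I_n.+1) := if unlift ord_max i is Some j then e j else u'.
exists n.+1, e' => v Vv.
have V'v : V' (v - l k v *: u').
  have Vu' : V u' by rewrite /u' -[_ *: u]addr0; apply: Vs.
  split; first by rewrite -scaleNr addrC; apply: Vs.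
  by rewrite linB // linZ // lu' mulr1 subrr.
have [c Hc] := He _ V'v.
exists (fun i => if unlift ord_max i is Some j then c j else l k v).
rewrite big_ord_recr /= /e' unlift_none.
have wE (i : 'I_n) : widen_ord (leqnSn n) i = lift ord_max i by apply: val_inj; rewrite /= /bump leqNgt ltn_ord.
under eq_bigr => i _ do rewrite wE liftK.
by rewrite -Hc subrK.
Qed.

Lemma ker_nonzero (l : nat -> X -> R) k : (forall i, (i < k)%N -> lin (l i)) ->
  ~ @finite_dimensional R X -> exists y : X, y <> 0 /\ forall i, (i < k)%N -> l i y = 0.
Proof.
move=> hl nfd; apply: contrapT => H; apply: nfd.
have HV : forall v : X, setT v -> (forall i, (i < k)%N -> l i v = 0) -> v = 0.
  by move=> v _ hv; apply: contrapT => v0; apply: H; exists v.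
have [n [e He]] := @span_ker l k hl setT (conj I (fun _ _ _ _ _ => I)) HV.
by exists n, e => x; exact: He.
Qed.

End Kernel.

Section Finite.
Context {R : realType} {X : normedModType R}.

Lemma fin_ext (r s : R) (x : X) :
  (forall f : X -> R, wstar_acc Ext_dual_ball f -> dnorm f <= r) -> r < s -> `|x| <= 1 ->
  exists k (l : nat -> X -> R), forall e, Ext_dual_ball e -> s <= e x ->
    exists2 i, (i < k)%N & e = l i.
Proof.
move=> Hr rs x1.
apply: contrapT => Hn.
pose A := [set e : X -> R | Ext_dual_ball e /\ s <= e x].
pose F := [set S : set (X -> R) | exists k (l : nat -> X -> R),
  forall e, A e -> (forall i, (i < k)%N -> e <> l i) -> S e].
have FF : ProperFilter F.
  apply: Build_ProperFilter_ex.
  - move=> S [k [l H]]; apply: contrapT => Sn; apply: Hn; exists k, l => e Ae sx.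
    apply: contrapT => ne; apply: Sn; exists e; apply: H => // i ik ei; apply: ne; by exists i.
  - split.
    + by exists 0%N, (fun _ _ => 0).
    + move=> S1 S2 [k1 [l1 H1]] [k2 [l2 H2]].
      exists (k1 + k2)%N, (fun i => if (i < k1)%N then l1 i else l2 (i - k1)%N) => e Ae ne.
      split.
      * apply: H1 => // i ik; have := ne i; rewrite ik; apply; exact: ltn_addr.
      * apply: H2 => // i ik; have := ne (k1 + i)%N.
        have -> : (k1 + i < k1)%N = false by apply/negbTE; rewrite -leqNgt leq_addr.
        rewrite addKn; apply; by rewrite ltn_add2l.
    + by move=> S1 S2 S12 [k [l H]]; exists k, l => e Ae ne; apply: S12; exact: H.
have Fb : F dual_ball by exists 0%N, (fun _ _ => 0) => e [[eb _] _].
have [g [gb gn]] := alaoglu F FF Fb.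
have gacc : wstar_acc Ext_dual_ball g.
  split; first by case: gb.
  move=> n xs eps e0.
  have FS : F [set e | A e /\ e <> g].
    exists 1%N, (fun _ => g) => e Ae ne; split => //; exact: (ne 0%N isT).
  have [h [[[Eh _] hg] Hh]] := gn _ FS n xs eps e0.
  by exists h.
have := Hr _ gacc.
have gx : s <= g x.
  apply: le_eps => eps e0.
  have FA : F A by exists 0%N, (fun _ _ => 0).
  have [h [[_ hs] hh]] := wnear1 _ _ x _ (gn _ FA) e0.
  move: hh; rewrite ltr_norml; lra.
have := dnorm_ge _ _ gb.1 x1.
have := ler_norm (g x).
lra.
Qed.

End Finite.

Theorem proposition2p2 (R : realType) (X : completeNormedModType R) :
  ~ @finite_dimensional R X ->
  @II_polyhedral R X ->
  exists delta : R, 0 < delta /\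
    forall (f : X -> R) (alpha : R),
      is_dual f -> f <> (fun _ => 0) -> 0 < alpha ->
      delta <= diam (slice f alpha).
Proof.
move=> nfd [r [/andP [r0 r1] Hr]].
exists (1 - r); split; first by lra.
move=> f alpha fd fn0 a0.
have [fl _] := fd.
have [x [x1 fx]] : exists x : X, `|x| <= 1 /\ dnorm f - alpha < f x.
  have hs : has_sup [set r : R | exists x : X, `|x| <= 1 /\ r = `|f x|].
    split; last exact: dnorm_set_ub.
    by exists `|f 0|, 0; rewrite normr0 ler01.
  have [_ [x0 [x01 ->]] hx0] := sup_adherent a0 hs.
  have [fx0|fx0] := leP 0 (f x0).
    by exists x0; split => //; rewrite -(ger0_norm fx0).
  exists (- x0); split; first by rewrite normrN.
  by rewrite (linN f x0 fl) -(ltr0_norm fx0).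
pose s := (1 + r) / 2.
have rs : r < s by rewrite /s; lra.
have [k [l Hl]] := fin_ext _ _ _ Hr rs x1.
pose l2 (i : nat) : X -> R := if i == k then f else
  if `[< Ext_dual_ball (l i) >] then l i else (fun _ => 0).
have l2l i : (i < k.+1)%N -> lin (l2 i).
  move=> _; rewrite /l2; case: eqP => // _; case: asboolP => [[[[] ] ] |] //.
  by move=> _ a u v; rewrite mulr0 addr0.
have [y [y0 Hy]] := ker_nonzero _ _ l2l nfd.
have ny : 0 < `|y| by rewrite normr_gt0; exact/eqP.
pose y1 := `|y|^-1 *: y.
have ny1 : `|y1| = 1 by rewrite /y1 normrZ normfV normr_id mulVf ?gt_eqF.
have Hy1 i : (i < k.+1)%N -> l2 i y1 = 0 by move=> ik; rewrite /y1 (linZ (l2 i) _ y (l2l _ ik)) Hy // mulr0.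
have fy1 : f y1 = 0 by have := Hy1 k (ltnSn k); rewrite /l2 eqxx.
pose t := (1 - r) / 2.
have t0 : 0 < t by rewrite /t; lra.
have inball (b : R) : `|b| <= 1 -> `|x + (b * t) *: y1| <= 1.
  move=> b1; rewrite leNgt; apply/negP => p1.
  have [g [gb gp]] := hahn_banach (x + (b * t) *: y1).
  have gp1 : 1 < g (x + (b * t) *: y1) by rewrite gp.
  have [e [Ee ep]] := krein_milman _ _ gb gp1.
  have [[[el _] _] _] := Ee.
  move: ep; rewrite (linD e x _ el) (linZ e _ y1 el).
  have [sx|sx] := leP s (e x).
    have [i ik ei] := Hl _ Ee sx.
    have : l2 i y1 = 0 by apply: Hy1; exact: ltnW.
    rewrite /l2 (ltn_eqF ik); case: asboolP => [_|]; last by rewrite -ei.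
    rewrite -ei => ->; rewrite mulr0 addr0.
    have := dual_ball_bound e x Ee.1; have := ler_norm (e x); lra.
  have hy := dual_ball_bound e y1 Ee.1; rewrite ny1 in hy.
  have hb : `|b * t * e y1| <= t.
    rewrite normrM (normrM b t) (gtr0_norm t0) -[leRHS]mul1r mulrAC.
    apply: ler_wpM2r; first exact: ltW.
    by rewrite -[1]mulr1; apply: ler_pM.
  have := ler_norm (b * t * e y1).
  rewrite /s /t in sx hb *; lra.
have slp (b : R) : `|b| <= 1 -> slice f alpha (x + (b * t) *: y1).
  move=> b1; split; first exact: inball.
  by rewrite (linD f x _ fl) (linZ f _ y1 fl) fy1 mulr0 addr0.
have hub : has_ubound [set r : R | exists u v, slice f alpha u /\ slice f alpha v /\ r = `|u - v|].
  exists 2 => _ [u [v [[u1 _] [[v1 _] ->]]]].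
  apply: le_trans (ler_normB u v) _; lra.
apply: le_trans (ub_le_sup hub _); last first.
  exists (x + (1 * t) *: y1), (x + ((-1) * t) *: y1); split; first by apply: slp; rewrite normr1.
  by split => //; apply: slp; rewrite normrN normr1.
rewrite opprD addrACA subrr add0r -scalerBl mulN1r opprK normrZ ny1 mulr1 mul1r.
rewrite ger0_norm; last by lra.
rewrite /t; lra.
Qed.
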